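(* Let $F\subsetneq K$ be fields of characteristic $0$, with $F$ a proper nonempty subfield of $K$. Let $p\in K[x]$ be a nonzero polynomial and $r$ a positive integer. Then $D_F(p^{[r]})\geq D_F(p)$.
   Context: $p^{[r]}$ denotes the $r$-th iterate of $p$. For sets $F\subset K$ and $p(x)=\sum_{k=0}^{n}a_kx^k\in K[x]$ with $a_n\neq 0$, the $F$ deficit $D_F(p)$ is defined as follows: if $p\in K[x]\setminus F[x]$, then $D_F(p)=n-\max\{0\le k\le n: a_k\notin F\}$; if $p\in F[x]$, then $D_F(p)=n$. Here $F[x]$ denotes the set of polynomials with all coefficients in $F$. *)

(* Defs.v *)
From mathcomp Require Import all_boot all_order all_algebra.
Set Implicit Arguments. Unset Strict Implicit. Unset Printing Implicit Defensive.
Import GRing.Theory.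
Local Open Scope ring_scope.

Definition poly_iter (K : fieldType) (r : nat) (p : {poly K}) : {poly K} :=
  iter r (fun q => p \Po q) 'X.

Definition deficit (K : fieldType) (F : {pred K}) (p : {poly K}) : nat :=
  if p \is a polyOver F then (size p).-1
  else ((size p).-1 - \max_(k < size p | (p`_k)%R \notin F) (k : nat))%N.

(* Main.v *)
Require Import Defs.
From mathcomp Require Import all_boot all_order all_algebra.
From mathcomp Require Import zify.
Set Implicit Arguments. Unset Strict Implicit. Unset Printing Implicit Defensive.
Import GRing.Theory.
Local Open Scope ring_scope.

Section Aux.
Variables (K : fieldType) (F : {pred K}).
Hypothesis subfieldF : GRing.divring_closed F.

Lemma F1 : 1 \in F. Proof. by case: subfieldF. Qed.
Lemma FB x y : x \in F -> y \in F -> x - y \in F.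
Proof. by case: subfieldF => _ h _; apply: h. Qed.
Lemma F0 : 0 \in F. Proof. by rewrite -(subrr 1) FB ?F1. Qed.
Lemma FN x : x \in F -> - x \in F. Proof. by move=> h; rewrite -sub0r FB ?F0. Qed.
Lemma FD x y : x \in F -> y \in F -> x + y \in F.
Proof. by move=> hx hy; rewrite -[y]opprK FB ?FN. Qed.
Lemma FM x y : x \in F -> y \in F -> x * y \in F.
Proof.
move=> hx hy; have mF : GRing.mulr_closed F := subfieldF.
by case: mF => _; apply.
Qed.
Lemma Fsum (I : Type) (r : seq I) (P : pred I) (f : I -> K) :
  (forall i, P i -> f i \in F) -> \sum_(i <- r | P i) f i \in F.
Proof.
move=> h; elim/big_rec: _ => [|i x Pi hx]; first exact: F0.
by apply: FD => //; apply: h.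
Qed.

Definition T (g : {poly K}) (t : nat) := forall k, (t <= k)%N -> g`_k \in F.

Lemma T_mono g t u : (t <= u)%N -> T g t -> T g u.
Proof. by move=> tu h k uk; apply: h; apply: leq_trans uk. Qed.

Lemma T_add a b t : T a t -> T b t -> T (a + b) t.
Proof. by move=> ha hb k tk; rewrite coefD FD ?ha ?hb. Qed.

Lemma T_small (g : {poly K}) t : (size g <= t)%N -> T g t.
Proof. by move=> h k tk; rewrite (nth_default 0 (leq_trans h tk)) F0. Qed.

Lemma T_mul a b t1 t2 : T a t1 -> T b t2 ->
  T (a * b) (maxn (t1 + size b - 1) (t2 + size a - 1)).
Proof.
move=> ha hb k; rewrite geq_max => /andP[h1 h2].
rewrite coefM; apply: Fsum => -[j /= ]; rewrite ltnS => jk _.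
have [jb|jb] := ltnP (k - j) (size b); last by rewrite (nth_default _ jb) mulr0 F0.
have [ja|ja] := ltnP j (size a); last by rewrite (nth_default _ ja) mul0r F0.
apply: FM; [apply: ha | apply: hb]; lia.
Qed.

Lemma T_scale c g t : c \in F -> T g t -> T (c *: g) t.
Proof. by move=> hc hg k tk; rewrite coefZ FM ?hg. Qed.

Lemma T_exp (g : {poly K}) d i : (d <= (size g).-1)%N -> T g (size g - d) ->
  T (g ^+ i) (((size g).-1 * i).+1 - d).
Proof.
move=> dg hg; case: i => [|i].
  move=> k _; rewrite expr0 coefC; case: (k == 0)%N; [exact: F1 | exact: F0].
elim: i => [|i IH]; first by rewrite expr1 muln1; apply: T_mono hg; lia.
rewrite exprS mulrC; apply: T_mono (T_mul IH hg).
have H := size_poly_exp_leq g i.+1; rewrite geq_max; apply/andP; rewrite (mulnS _ i.+1).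
have HX : ((size g).-1 <= (size g).-1 * i.+1)%N by rewrite leq_pmulr.
move: H dg HX {IH hg}; move: ((size g).-1 * i.+1)%N => X H dg HX; rewrite -!subn1 in dg H HX *; split; lia.
Qed.

Lemma T_comp (p g : {poly K}) d : (d <= (size g).-1)%N -> (2 <= size g)%N -> T p (size p - d) -> T g (size g - d) ->
  T (p \Po g) (size (p \Po g) - d).
Proof.
move=> dg g2 hp hg.
have sz : (size (p \Po g)).-1 = ((size p).-1 * (size g).-1)%N := size_comp_poly p g.
have [p0|pn0] := eqVneq p 0.
  by rewrite p0 comp_poly0; apply: T_small; rewrite size_poly0.
have spos : (0 < size p)%N by rewrite size_poly_gt0.
have sq : size (p \Po g) = ((size p).-1 * (size g).-1).+1.
  have : (0 < size (p \Po g))%N.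
    by rewrite size_poly_gt0 comp_poly_eq0.
  lia.
rewrite sq comp_polyE; elim/big_rec: _ => [|i x _ hx].
  by apply: T_small; rewrite size_poly0.
apply: T_add => //.
have [hi|hi] := leqP (size p - d) i.
  refine (T_scale (hp _ hi) _).
  refine (T_mono _ (T_exp (i:=i) dg hg)).
  have : (i < size p)%N by case: i {hi}.
  move=> ip; apply: leq_sub2r; rewrite ltnS [X in (_ <= X)%N]mulnC leq_mul2l; apply/orP; right; lia.
apply: T_small; apply: leq_trans (size_scale_leq _ _) _.
apply: leq_trans (size_poly_exp_leq _ _) _.
have ip : (i < size p)%N by case: i {hi}.
have A : (i * (size g).-1 + d * (size g).-1 <= (size p).-1 * (size g).-1)%N.
  rewrite -mulnDl leq_mul2r; lia.
have B : (d <= d * (size g).-1)%N by rewrite leq_pmulr; lia.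
lia.
Qed.

Lemma polyOver_coef (p : {poly K}) : p \is a polyOver F -> forall k, p`_k \in F.
Proof.
move=> /(all_nthP 0) h k; have [kp|kp] := ltnP k (size p); first exact: h.
by rewrite nth_default ?F0.
Qed.

End Aux.

Theorem theorem21 (K : fieldType) (F : {pred K})
  (charK0 : [pchar K] =i pred0)
  (subfieldF : GRing.divring_closed F)
  (properF : exists x : K, x \notin F)
  (p : {poly K}) (p_neq0 : p != 0) (r : nat) (r_gt0 : (0 < r)%N) :
  (deficit F p <= deficit F (poly_iter r p))%N.
Proof.
set d := deficit F p.
have dle : (d <= (size p).-1)%N by rewrite /d /deficit; case: ifP => _ //; apply: leq_subr.
have [sp1|sp2] := leqP (size p) 1.
  have : d = 0%N by lia.
  by move=> ->.
have hp : T F p (size p - d).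
  rewrite /d /deficit; case: ifPn => [h k _ | nF]; first exact: polyOver_coef.
  move=> k hk; apply/negPn/negP => kF.
  have kp : (k < size p)%N.
    by rewrite ltnNge; apply/negP => h; move: kF; rewrite nth_default // (F0 subfieldF).
  have := @leq_bigmax_cond _ (fun k : 'I_(size p) => p`_k \notin F) (fun k => k : nat)
     (Ordinal kp) kF.
  move: hk; set m := \max_(_ < _ | _) _.
  have : (m <= (size p).-1)%N.
    by apply/bigmax_leqP => j _; rewrite -ltnS prednK //; lia.
  clearbody m; rewrite -!subn1 => h1 h2 h3; simpl in h3; lia.
have inv : forall s, (size p <= size (poly_iter s.+1 p))%N /\
    T F (poly_iter s.+1 p) (size (poly_iter s.+1 p) - d).
  elim=> [|s [IH1 IH2]].
    by rewrite /poly_iter /= comp_polyXr.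
  set g := poly_iter s.+1 p in IH1 IH2 *.
  have -> : poly_iter s.+2 p = p \Po g by [].
  have sz : (size (p \Po g)).-1 = ((size p).-1 * (size g).-1)%N := size_comp_poly p g.
  have g2 : (1 < size g)%N by lia.
  have nz : p \Po g != 0 by rewrite comp_poly_eq0.
  have spos : (0 < size (p \Po g))%N by rewrite size_poly_gt0.
  have M1 : ((size p).-1 <= (size p).-1 * (size g).-1)%N by rewrite leq_pmulr //; lia.
  split; first lia.
  apply: T_comp => //; lia.
case: r r_gt0 => // r _.
have [I1 I2] := inv r.
move: I1 I2; set q := poly_iter r.+1 p => I1 I2.
rewrite /deficit -/d; case: ifPn => [_ | nF]; first lia.
have : (\max_(k < size q | (q`_k)%R \notin F) (k : nat) <= (size q).-1 - d)%N.
  apply/bigmax_leqP => j jF.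
  have : ~~ (size q - d <= j)%N by apply/negP => h; move: jF; rewrite I2.
  have := ltn_ord j; lia.
lia.
Qed.
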